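(* Let $C\subseteq\mathbb{R}^m$ be closed convex and $\ell$ a loss with (sub)gradient $g$ such that $\ell$ is $(h,\phi)$-restorative and $(\ell,C)$ satisfies inward flow. Let $B\ge0$. Then for every $\tilde\theta\in\mathbb{R}^m$ with $\|\Pi_C(\tilde\theta)-\tilde\theta\|_2\le B$ and $\|\tilde\theta\|_2>h+B$, $$\big\langle\tilde\theta,g(\Pi_C(\tilde\theta))\big\rangle\ge\phi(\Pi_C(\tilde\theta)).$$
   Context: $\Pi_C$ is Euclidean projection onto $C$. $\ell$ is $(h,\phi)$-restorative ($h\ge0$, $\phi$ nonnegative) if all subgradients $g$ satisfy $\langle\theta,g(\theta)\rangle\ge\phi(\theta)$ whenever $\|\theta\|_2>h$. $(\ell,C)$ satisfies inward flow if $-g(\theta)\in T_C(\theta)$ for all $\theta$ on the boundary of $C$, where $T_C(x)=\mathrm{cl}\{y:\exists\beta>0,\ x+\varepsilon y\in C\ \forall\varepsilon\in[0,\beta]\}$. *)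

(* Defs.v *)
From HB Require Import structures.
From mathcomp Require Import all_boot all_order all_algebra.
From mathcomp Require Import all_classical all_reals all_analysis.
Set Implicit Arguments. Unset Strict Implicit. Unset Printing Implicit Defensive.
Import Order.TTheory GRing.Theory Num.Theory.
Import numFieldNormedType.Exports.
Local Open Scope classical_set_scope.
Local Open Scope ring_scope.

Definition dotp {R : realType} {m : nat} (u v : 'rV[R]_m) : R :=
  \sum_(i < m) u ord0 i * v ord0 i.

Definition norm2 {R : realType} {m : nat} (u : 'rV[R]_m) : R :=
  Num.sqrt (dotp u u).

Definition is_proj {R : realType} {m : nat} (C : set 'rV[R]_m) (theta p : 'rV[R]_m) : Prop :=
  C p /\ forall y, C y -> norm2 (theta - p) <= norm2 (theta - y).

Definition restorative {R : realType} {m : nat} (g : 'rV[R]_m -> 'rV[R]_m)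
  (h : R) (phi : 'rV[R]_m -> R) : Prop :=
  forall theta, h < norm2 theta -> phi theta <= dotp theta (g theta).

Definition tangent_cone {R : realType} {m : nat} (C : set 'rV[R]_m) (x : 'rV[R]_m)
  : set 'rV[R]_m :=
  @closure _ [set y : 'rV[R]_m | exists2 beta : R, 0 < beta &
             forall eps : R, 0 <= eps -> eps <= beta -> C (x + eps *: y)].

Definition boundary {R : realType} {m : nat} (C : set 'rV[R]_m) : set 'rV[R]_m :=
  closure C `\` interior C.

Definition inward_flow {R : realType} {m : nat} (g : 'rV[R]_m -> 'rV[R]_m)
  (C : set 'rV[R]_m) : Prop :=
  forall theta, boundary C theta -> tangent_cone C theta (- g theta).

(* Main.v *)
Require Import Defs.
From HB Require Import structures.
From mathcomp Require Import all_boot all_order all_algebra.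
From mathcomp Require Import all_classical all_reals all_analysis.
From mathcomp Require Import lra.
Import Order.TTheory GRing.Theory Num.Theory.
Import numFieldNormedType.Exports.
Local Open Scope classical_set_scope.
Local Open Scope ring_scope.

Section S.
Context {R : realType} {m : nat}.
Implicit Types u v w : 'rV[R]_m.

Lemma dotpC u v : dotp u v = dotp v u.
Proof. by apply: eq_bigr => i _; rewrite mulrC. Qed.
Lemma dotpDl u v w : dotp (u + v) w = dotp u w + dotp v w.
Proof. by rewrite /dotp -big_split; apply: eq_bigr => i _; rewrite mxE mulrDl. Qed.
Lemma dotpZl a u w : dotp (a *: u) w = a * dotp u w.
Proof. by rewrite /dotp mulr_sumr; apply: eq_bigr => i _; rewrite mxE mulrA. Qed.
Lemma dotpNl u w : dotp (- u) w = - dotp u w.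
Proof. by rewrite /dotp -sumrN; apply: eq_bigr => i _; rewrite mxE mulNr. Qed.
Lemma dotpBl u v w : dotp (u - v) w = dotp u w - dotp v w.
Proof. by rewrite dotpDl dotpNl. Qed.
Lemma dotpDr u v w : dotp w (u + v) = dotp w u + dotp w v.
Proof. by rewrite dotpC dotpDl !(dotpC w). Qed.
Lemma dotpZr a u w : dotp w (a *: u) = a * dotp w u.
Proof. by rewrite dotpC dotpZl dotpC. Qed.
Lemma dotpNr u w : dotp w (- u) = - dotp w u.
Proof. by rewrite dotpC dotpNl dotpC. Qed.
Lemma dotpBr u v w : dotp w (u - v) = dotp w u - dotp w v.
Proof. by rewrite dotpDr dotpNr. Qed.
Lemma dotp_ge0 u : 0 <= dotp u u.
Proof. by apply: sumr_ge0 => i _; rewrite -expr2 sqr_ge0. Qed.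
Lemma dotp0 u w : dotp u u = 0 -> dotp w u = 0.
Proof.
move=> /eqP; rewrite /dotp psumr_eq0; last by move=> i _; rewrite -expr2 sqr_ge0.
move=> /allP H; apply: big1 => i _.
have := H i (mem_index_enum i); rewrite -expr2 sqrf_eq0 => /eqP ->; by rewrite mulr0.
Qed.

Lemma CS_sq u v : dotp u v ^+ 2 <= dotp u u * dotp v v.
Proof.
set a := dotp u u; set b := dotp u v; set c := dotp v v.
have c0 : 0 <= c by apply: dotp_ge0.
have [cz|cp] := eqVneq c 0.
  rewrite cz mulr0 /b dotp0 // expr2 mulr0 //.
have cpos : 0 < c by rewrite lt0r cp.
have := dotp_ge0 (c *: u - b *: v).
rewrite !dotpBl !dotpBr !dotpZl !dotpZr -/a -/b -/c (dotpC v u) -/b => H.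
have : 0 <= c * (a * c - b ^+ 2) by rewrite expr2; nra.
by rewrite pmulr_rge0 // subr_ge0 mulrC.
Qed.

Lemma CS u v : dotp u v <= norm2 u * norm2 v.
Proof.
rewrite /norm2 -sqrtrM ?dotp_ge0 //.
apply: le_trans (ler_norm _) _.
by rewrite -sqrtr_sqr ler_sqrt ?CS_sq // mulr_ge0 // dotp_ge0.
Qed.

Lemma norm2_ge0 u : 0 <= norm2 u.
Proof. exact: sqrtr_ge0. Qed.

Lemma norm2_sq u : norm2 u ^+ 2 = dotp u u.
Proof. by rewrite sqr_sqrtr // dotp_ge0. Qed.

Lemma norm2_triangle u v : norm2 (u + v) <= norm2 u + norm2 v.
Proof.
rewrite -(ler_pXn2r (n := 2)) // ?nnegrE ?addr_ge0 ?norm2_ge0 //.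
rewrite norm2_sq dotpDl !dotpDr (dotpC v u) -!norm2_sq.
have := CS u v; lra.
Qed.

Lemma norm2N u : norm2 (- u) = norm2 u.
Proof. by rewrite /norm2 dotpNl dotpNr opprK. Qed.

Lemma norm2_le u v : norm2 u <= norm2 v -> dotp u u <= dotp v v.
Proof. by rewrite /norm2 ler_sqrt // dotp_ge0. Qed.

End S.
Section S.
Context {R : realType} {m : nat}.
Implicit Types u v w : 'rV[R]_m.

Lemma dotp_cont w : continuous (fun d : 'rV[R]_m => dotp w d).
Proof.
rewrite /dotp; apply: continuous_big; first exact: add_continuous.
move=> i _ x.
apply: (@continuous_comp _ _ _ (fun M : 'rV[R]_m => M ord0 i) ( *%R (w ord0 i))).
  exact: coord_continuous.
exact: mulrl_continuous.
Qed.

Lemma halfspace_closed w : closed [set d | dotp w d <= 0].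
Proof.
have -> : [set d | dotp w d <= 0] = (fun d => dotp w d) @^-1` [set x : R | x <= 0] by [].
apply: preimage_closed; [move=> x _; exact: dotp_cont | exact: closed_le].
Qed.

Lemma small_eps (b c beta : R) : 0 < beta -> 0 <= c ->
  (forall eps, 0 < eps -> eps <= beta -> 2 * b <= eps * c) -> b <= 0.
Proof.
move=> b0 c0 H; rewrite leNgt; apply/negP => bp.
pose e := Num.min beta (b / (c + 1)).
have e0 : 0 < e by rewrite lt_min b0 divr_gt0 // ltr_wpDl.
have eb : e <= beta by rewrite ge_min lexx.
have ec : e * (c + 1) <= b.
  by rewrite -ler_pdivlMr ?ltr_wpDl // ge_min lexx orbT.
have := H e e0 eb; nra.
Qed.

Lemma feasible_le (C : set 'rV[R]_m) th p d : is_proj C th p ->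
  (exists2 beta : R, 0 < beta & forall eps : R, 0 <= eps -> eps <= beta -> C (p + eps *: d)) ->
  dotp (th - p) d <= 0.
Proof.
move=> [Cp Hp] [beta b0 Hb].
apply: (@small_eps _ (dotp d d) beta b0 (dotp_ge0 d)) => e e0 eb.
have := norm2_le _ _ (Hp _ (Hb e (ltW e0) eb)).
have -> : th - (p + e *: d) = (th - p) - e *: d by rewrite opprD addrA.
set v := th - p.
clearbody v; rewrite !dotpBl !dotpBr !dotpZl !dotpZr (dotpC d v) => H.

have : e * (2 * dotp v d) <= e * (e * dotp d d) by lra.
by rewrite ler_pM2l // mulrA.
Qed.

Lemma tangent_le (C : set 'rV[R]_m) th p d : is_proj C th p ->
  tangent_cone C p d -> dotp (th - p) d <= 0.
Proof.
move=> Hp Hd.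
have : closure [set d | dotp (th - p) d <= 0] d.
  apply: closureS Hd => y Hy; exact: feasible_le Hp Hy.
by rewrite -(proj1 (closure_id _) (halfspace_closed _)).
Qed.

Lemma interior_feasible (C : set 'rV[R]_m) p d : interior C p ->
  exists2 beta : R, 0 < beta & forall eps : R, 0 <= eps -> eps <= beta -> C (p + eps *: d).
Proof.
move=> Hi.
have hc : (fun t : R => p + t *: d) @ (nbhs (0:R)) --> p.
  rewrite -{2}[p]addr0 -[X in _ + X](scale0r d).
  apply: cvgD; first exact: cvg_cst.
  apply: cvgZr_tmp; exact: cvg_id.
have := hc _ Hi; move=> /nbhs_ballP [e e0 He].
exists (e / 2); first by rewrite divr_gt0.
move=> eps eps0 epse; apply: He.
rewrite /ball /= sub0r normrN ger0_norm //.
apply: (le_lt_trans epse); rewrite ltr_pdivrMr //; move: e0 => /= e0; lra.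
Qed.

End S.
Theorem lemma7 (R : realType) (m : nat) (C : set 'rV[R]_m)
  (g : 'rV[R]_m -> 'rV[R]_m) (h : R) (phi : 'rV[R]_m -> R) (B : R) :
  closed C -> convex_set C ->
  0 <= h -> (forall theta, 0 <= phi theta) ->
  restorative g h phi -> inward_flow g C ->
  0 <= B ->
  forall theta_t p : 'rV[R]_m,
    is_proj C theta_t p ->
    norm2 (p - theta_t) <= B ->
    h + B < norm2 theta_t ->
    phi p <= dotp theta_t (g p).
Proof.
move=> clC cvC h0 phi0 Hres Hin B0 th p Hp HpB Hth.
have Hg : tangent_cone C p (- g p).
  have [Hi|Hni] := pselect (interior C p).
    apply: subset_closure; exact: (interior_feasible _ _ _ Hi).
  by apply: Hin; split; [exact: subset_closure Hp.1 | exact: Hni].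
have Hv := tangent_le _ _ _ _ Hp Hg.
rewrite dotpNr oppr_le0 in Hv.
have Hnp : h < norm2 p.
  have := norm2_triangle p (th - p).
  have -> : p + (th - p) = th by rewrite addrC subrK.
  have : norm2 (th - p) <= B by rewrite -norm2N opprB.
  lra.
have := Hres p Hnp.
have -> : dotp th (g p) = dotp p (g p) + dotp (th - p) (g p).
  by rewrite dotpBl addrC subrK.
lra.
Qed.
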